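(* Let $a_1<\dots<a_n$ and $d_1,\dots,d_n$ be real numbers forming a symmetric unit with $a_n=-a_1$, i.e. $a_{n+1-i}=-a_i$ and $d_{n+1-i}=d_i$ for all $i\in\{1,\dots,n\}$. Then for every $H\in\mathbb{R}$, the maximum over $c\in\mathbb{R}$ of $\big|\sum_{i=1}^n d_i\sin(Ha_i+c)\big|$ is attained at $c=\pi/2$ (equivalently at $c=-\pi/2$); that is, one may take $c_{max}(H)=\pm\pi/2$.
   Context: For an array of Josephson junctions with real positions $a_1<\dots<a_n$ and real strengths $d_1,\dots,d_n$, and an applied magnetic field $H\in\mathbb{R}$, the maximal current in the magnetic approximation is $\gamma_{max}(H)=\max_{c\in\mathbb{R}}\big|\sum_{i=1}^n d_i\sin(Ha_i+c)\big|$, and $c_{max}(H)$ denotes a value of $c$ at which this maximum is attained. *)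

(* Defs.v *)
From Stdlib Require Import Reals Lra.
Open Scope R_scope.

(* Junctions indexed 0..n-1 (paper's index i corresponds to i-1 here).
   junction_sum n a d H c = sum_{i=0}^{n-1} d_i sin(H a_i + c). *)
Fixpoint junction_sum (n : nat) (a d : nat -> R) (H c : R) : R :=
  match n with
  | O => 0
  | S m => junction_sum m a d H c + d m * sin (H * a m + c)
  end.

(* Main.v *)
Require Import Defs.
From Stdlib Require Import Reals Lra Lia.
Open Scope R_scope.

Fixpoint sumf (n : nat) (f : nat -> R) : R :=
  match n with O => 0 | S m => sumf m f + f m end.

Lemma sumf_ext n f g : (forall i, (i < n)%nat -> f i = g i) -> sumf n f = sumf n g.
Proof.
  induction n; simpl; intros Hf; [reflexivity|].
  rewrite IHn by (intros; apply Hf; lia). rewrite Hf by lia. reflexivity.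
Qed.

Lemma sumf_shift n f : sumf (S n) f = f 0%nat + sumf n (fun i => f (S i)).
Proof.
  induction n; simpl in *; [ring|]. rewrite IHn. ring.
Qed.

Lemma sumf_rev n f : sumf n f = sumf n (fun i => f (n - 1 - i)%nat).
Proof.
  revert f; induction n; intros f; [reflexivity|].
  rewrite sumf_shift. rewrite (IHn (fun i => f (S i))).
  simpl sumf at 2.
  replace (S n - 1 - n)%nat with 0%nat by lia.
  rewrite (sumf_ext n (fun i => f (S (n - 1 - i))) (fun i => f (S n - 1 - i)%nat)).
  - simpl. replace (n - 0 - n)%nat with 0%nat by lia. ring.
  - intros i Hi. f_equal. lia.
Qed.

Lemma sumf_opp n f : sumf n (fun i => - f i) = - sumf n f.
Proof. induction n; simpl; [ring|]. rewrite IHn. ring. Qed.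

Lemma js_decomp n a d H c :
  junction_sum n a d H c =
  cos c * sumf n (fun i => d i * sin (H * a i)) + sin c * sumf n (fun i => d i * cos (H * a i)).
Proof.
  induction n; simpl; [ring|]. rewrite IHn, sin_plus. ring.
Qed.

Theorem mainTheorem4 (n : nat) (a d : nat -> R)
  (Hinc : forall i j : nat, (i < j < n)%nat -> a i < a j)
  (Hsyma : forall i : nat, (i < n)%nat -> a (n - 1 - i)%nat = - a i)
  (Hsymd : forall i : nat, (i < n)%nat -> d (n - 1 - i)%nat = d i)
  (H : R) :
  (forall c : R, Rabs (junction_sum n a d H c) <= Rabs (junction_sum n a d H (PI / 2)))
  /\ Rabs (junction_sum n a d H (- (PI / 2))) = Rabs (junction_sum n a d H (PI / 2)).
Proof.
  assert (HA : sumf n (fun i => d i * sin (H * a i)) = 0).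
  { assert (E : sumf n (fun i => d i * sin (H * a i)) = - sumf n (fun i => d i * sin (H * a i))).
    { rewrite sumf_rev at 1. rewrite <- sumf_opp. apply sumf_ext.
      intros i Hi. rewrite Hsyma, Hsymd by exact Hi.
      replace (H * - a i) with (- (H * a i)) by ring. rewrite sin_neg. ring. }
    lra. }
  set (B := sumf n (fun i => d i * cos (H * a i))).
  assert (K : forall c, junction_sum n a d H c = sin c * B).
  { intro c. rewrite js_decomp, HA. unfold B. ring. }
  rewrite !K, sin_neg, sin_PI2. split.
  - intro c. rewrite K, !Rabs_mult, Rabs_R1.
    assert (Rabs (sin c) <= 1) by (apply Rabs_le; apply SIN_bound).
    assert (0 <= Rabs B) by apply Rabs_pos. rewrite Rmult_1_l. rewrite <- (Rmult_1_l (Rabs B)) at 2. apply Rmult_le_compat_r; assumption.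
  - rewrite Ropp_mult_distr_l_reverse, Rabs_Ropp. reflexivity.
Qed.
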